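(* Let $(l_n)$ and $(k_n)$ be sequences of positive integers such that $$\lim_{n\to\infty}\Big(1-\frac{1}{2^{l_n}}\Big)^{k_n}=1\quad\text{and}\quad \lim_{n\to\infty}\frac{k_nl_n}{2^{l_n}}=\infty.$$ Then the sequence of functions $f_n:\{-1,1\}^{l_nk_n}\to\{-1,0,1\}$, $f_n(\omega):=\mathsf{Tribes}(l_n,k_n)(\omega)-\mathsf{Tribes}(l_n,k_n)(-\omega)$, is bribable. Moreover, there is a sequence of positive integers $a_n\to\infty$ such that $\mathbb{P}[|\mathscr{P}_n|>a_n]\to1$, where $\mathscr{P}_n$ is the pivotal set of $\mathsf{Tribes}(l_n,k_n)$.
   Context: $\{-1,1\}^{m}$ carries the uniform product measure $\mathbb{P}$, $\omega$ uniform. $\mathsf{Tribes}(l,k):\{-1,1\}^{lk}\to\{0,1\}$: the $lk$ coordinates are partitioned into $k$ disjoint blocks (''tribes'') of $l$ elements each; $\mathsf{Tribes}(l,k)(\omega)=1$ if there is a tribe $T$ with $\omega(i)=1$ for all $i\in T$, and $0$ otherwise. For $i$ a coordinate, $\omega^i$ is $\omega$ with the $i$-th coordinate flipped; the pivotal set of a function $g$ is $\{i: g(\omega)\neq g(\omega^i)\}$. A function $f$ on $\{-1,1\}^m$ is transitive if there is a group of permutations of the coordinates acting transitively under which $f$ is invariant. A sequence $f_n:\{-1,1\}^{m_n}\to\{-1,0,1\}$ is called bribable if: (1) each $f_n$ is transitive; (2) $\lim_n\mathbb{P}[f_n=0]=1$; (3) $\lim_n\mathbb{P}[\exists\, i,j\in[m_n]: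 f_n(\omega^i)=1\text{ and }f_n(\omega^j)=-1]=1$. *)

(* Defs.v *)
From HB Require Import structures.
From mathcomp Require Import all_boot all_order all_algebra all_fingroup.
From mathcomp Require Import all_classical all_reals all_analysis.
Set Implicit Arguments. Unset Strict Implicit. Unset Printing Implicit Defensive.
Import Order.TTheory GRing.Theory Num.Theory.
Import numFieldNormedType.Exports.

(* A point omega of {-1,1}^m is encoded as omega : {ffun 'I_m -> bool},
   with true <-> +1 and false <-> -1. *)
Notation cube m := {ffun 'I_m -> bool}.

Local Open Scope ring_scope.
Local Open Scope classical_set_scope.

Definition prob (R : realType) (m : nat) (A : pred (cube m)) : R :=
  (#|A|%:R / #|{: cube m}|%:R).

Definition flip (m : nat) (w : cube m) (i : 'I_m) : cube m :=
  [ffun j => if j == i then ~~ w j else w j].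

Definition negw (m : nat) (w : cube m) : cube m := [ffun j => ~~ w j].

Definition tribes (l k : nat) (w : cube (l * k)) : bool :=
  [exists j : 'I_k, [forall i : 'I_(l * k), ((i %/ l)%N == j) ==> w i]].

Definition pivotal {T : eqType} (m : nat) (g : cube m -> T) (w : cube m)
  : {set 'I_m} := [set i | g w != g (flip w i)].

Definition transitive_fun {T : Type} (m : nat) (f : cube m -> T) : Prop :=
  exists G : {group {perm 'I_m}},
    [transitive G, on [set: 'I_m]%SET | 'P] /\
    forall s, s \in G -> forall w : cube m, f [ffun i => w (s i)] = f w.

Definition bribable (R : realType) (m : nat -> nat)
  (f : forall n, cube (m n) -> int) : Prop :=
  [/\ forall n, transitive_fun (f n),
      (fun n => prob R (fun w => f n w == 0%R)) @ \oo --> (1 : R)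
    & (fun n => prob R (fun w =>
          [exists i, exists j, (f n (flip w i) == 1%R) && (f n (flip w j) == (-1)%R)]))
        @ \oo --> (1 : R)].

Definition tribes_diff (l k : nat) (w : cube (l * k)) : int :=
  (tribes w)%:Z - (tribes (negw w))%:Z.

(* Main.v *)
Require Import Defs.
From HB Require Import structures.
From mathcomp Require Import all_boot all_order all_algebra all_fingroup.
From mathcomp Require Import all_classical all_reals all_analysis.
From mathcomp Require Import zify ring lra.
Import Order.TTheory GRing.Theory Num.Theory.
Import numFieldNormedType.Exports.
Local Open Scope ring_scope.
Local Open Scope classical_set_scope.
Set Implicit Arguments. Unset Strict Implicit. Unset Printing Implicit Defensive.


Local Open Scope ring_scope.
Local Open Scope classical_set_scope.
Local Open Scope nat_scope.

Lemma idx_lt l k (j : 'I_k) (b : 'I_l) : j * l + b < l * k.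
Proof.
have := ltn_ord j; have := ltn_ord b => hb hj.
have : j.+1 * l <= k * l by rewrite leq_mul2r hj orbT.
rewrite mulSn [k * l]mulnC => h.
by apply: leq_trans h; rewrite addnC ltn_add2r.
Qed.

Definition idx l k (j : 'I_k) (b : 'I_l) : 'I_(l * k) := Ordinal (idx_lt j b).

Lemma idx_div l k (j : 'I_k) (b : 'I_l) : (idx j b) %/ l = j.
Proof.
have hl : 0 < l by case: b => /= b; case: l => // /[swap] -[].
by rewrite /= divnMDl // divn_small // addn0.
Qed.

Lemma idx_mod l k (j : 'I_k) (b : 'I_l) : (idx j b) %% l = b.
Proof. by rewrite /= modnMDl modn_small. Qed.

Lemma lpos l k (i : 'I_(l * k)) : 0 < l.
Proof. case: i; case: l => //. Qed.

Lemma div_lt l k (i : 'I_(l * k)) : i %/ l < k.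
Proof. by rewrite ltn_divLR ?(lpos i) // [k * l]mulnC. Qed.

Lemma mod_lt l k (i : 'I_(l * k)) : i %% l < l.
Proof. by rewrite ltn_pmod ?(lpos i). Qed.

Definition qo l k (i : 'I_(l * k)) : 'I_k := Ordinal (div_lt i).
Definition ro l k (i : 'I_(l * k)) : 'I_l := Ordinal (mod_lt i).

Lemma idx_qr l k (i : 'I_(l * k)) : idx (qo i) (ro i) = i.
Proof. by apply: val_inj; rewrite /= -divn_eq. Qed.

Lemma qo_idx l k (j : 'I_k) (b : 'I_l) : qo (idx j b) = j.
Proof. by apply: val_inj; rewrite /= idx_div. Qed.

Lemma ro_idx l k (j : 'I_k) (b : 'I_l) : ro (idx j b) = b.
Proof. by apply: val_inj; rewrite /= idx_mod. Qed.

Definition blk l k (w : cube (l * k)) (j : 'I_k) : {ffun 'I_l -> bool} :=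
  [ffun b => w (idx j b)].

Definition curryc l k (w : cube (l * k)) : {ffun 'I_k -> {ffun 'I_l -> bool}} :=
  [ffun j => blk w j].

Definition uncurryc l k (W : {ffun 'I_k -> {ffun 'I_l -> bool}}) : cube (l * k) :=
  [ffun i => W (qo i) (ro i)].

Lemma curryK l k : cancel (@curryc l k) (@uncurryc l k).
Proof. by move=> w; apply/ffunP => i; rewrite !ffunE idx_qr. Qed.

Lemma uncurryK l k : cancel (@uncurryc l k) (@curryc l k).
Proof.
by move=> W; apply/ffunP => j; apply/ffunP => b; rewrite !ffunE qo_idx ro_idx.
Qed.

Lemma card_blocks l k (F : 'I_k -> pred {ffun 'I_l -> bool}) :
  #|[pred w : cube (l * k) | [forall j, F j (blk w j)]]| = \prod_j #|F j|.
Proof.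
have -> : #|[pred w : cube (l * k) | [forall j, F j (blk w j)]]|
        = #|image_mem (@uncurryc l k) (mem (family F))|.
  apply: eq_card => w; rewrite !inE.
  apply/forallP/fintype.imageP => [h | [W hW ->] j].
    exists (curryc w); last by rewrite curryK.
    by apply/familyP => j; have := h j; rewrite ffunE.
  have := familyP hW j; rewrite -[X in blk X]/(uncurryc W).
  suff -> : blk (uncurryc W) j = W j by [].
  by have := uncurryK W => /ffunP /(_ j); rewrite ffunE.
rewrite fintype.card_image; last exact: can_inj (@uncurryK l k).
have := @bigA_distr_big_dep nat 0 1 muln addn 'I_k {ffun 'I_l -> bool} F (fun _ _ => 1).
rewrite big1_eq sum1_card => <-; apply: eq_bigr => j _.
by rewrite sum1_card.
Qed.


Local Open Scope ring_scope.
Local Open Scope classical_set_scope.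

Lemma card_cube m : #|{: cube m}| = (2 ^ m)%N.
Proof. by rewrite card_ffun card_bool card_ord. Qed.

Lemma cube_pos (R : realType) m : 0 < (#|{: cube m}|%:R : R).
Proof. by rewrite card_cube ltr0n expn_gt0. Qed.

Lemma prob_ge0 (R : realType) m (A : pred (cube m)) : 0 <= prob R A.
Proof. by rewrite /prob divr_ge0. Qed.

Lemma prob_le1 (R : realType) m (A : pred (cube m)) : prob R A <= 1.
Proof.
rewrite /prob ler_pdivrMr ?cube_pos // mul1r ler_nat.
by rewrite max_card.
Qed.

Lemma prob_le (R : realType) m (A B : pred (cube m)) :
  (forall w, A w -> B w) -> prob R A <= prob R B.
Proof.
move=> h; rewrite /prob ler_pM2r ?invr_gt0 ?cube_pos // ler_nat.
by apply: subset_leq_card; apply/fintype.subsetP => w; rewrite /in_mem /=; apply: h.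
Qed.

Lemma probC (R : realType) m (A : pred (cube m)) :
  prob R (fun w => ~~ A w) = 1 - prob R A.
Proof.
rewrite /prob; apply: (@mulIf _ (#|{: cube m}|%:R)); first by rewrite gt_eqF ?cube_pos.
rewrite mulrBl !mulfVK ?gt_eqF ?cube_pos // mul1r.
rewrite -(cardC A) natrD addrC addKr.
by congr (_ %:R); apply/eq_card => w; rewrite !inE.
Qed.

Lemma prob_exists (R : realType) m A (P : 'I_A -> pred (cube m)) :
  prob R (fun w => [exists g, P g w]) <= \sum_g prob R (P g).
Proof.
rewrite /prob -mulr_suml ler_pM2r ?invr_gt0 ?cube_pos // -natr_sum ler_nat.
rewrite -sum1_card.
have -> : \sum_g #|P g| = \sum_g \sum_w (P g w : nat).
  apply: eq_bigr => g _; rewrite -sum1_card big_mkcond /=.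
  by apply: eq_bigr => w _; rewrite /in_mem /=; case: (P g w).
rewrite exchange_big /= big_mkcond /=; apply: leq_sum => w _.
rewrite /in_mem /=; case: (boolP [exists g, P g w]) => // /fintype.existsP [g hg].
by rewrite (bigD1 g) //= hg.
Qed.

Lemma probU (R : realType) m (A B : pred (cube m)) :
  prob R (fun w => A w || B w) <= prob R A + prob R B.
Proof.
have := @prob_exists R m 2 (fun g => if val g == 0%N then A else B).
rewrite big_ord_recr big_ord_recr big_ord0 /= add0r.
move=> h; apply: le_trans h; apply: prob_le => w /orP [hA|hB].
  by apply/fintype.existsP; exists ord0.
by apply/fintype.existsP; exists ord_max.
Qed.


Local Open Scope ring_scope.
Local Open Scope classical_set_scope.

Lemma card_blockV l : #|{: {ffun 'I_l -> bool}}| = (2 ^ l)%N.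
Proof. by rewrite card_ffun card_bool card_ord. Qed.

Lemma prob_blocks (R : realType) l k (J : {set 'I_k}) (Q : pred {ffun 'I_l -> bool}) :
  prob R (fun w : cube (l * k) => [forall j in J, Q (blk w j)])
  = (#|Q|%:R / (2 ^ l)%:R) ^+ #|J|.
Proof.
pose F j : pred {ffun 'I_l -> bool} := if j \in J then Q else predT.
rewrite /prob.
have -> : #|(fun w : cube (l * k) => [forall j in J, Q (blk w j)])|
        = #|[pred w : cube (l * k) | [forall j, F j (blk w j)]]|.
  apply: eq_card => w; rewrite [in RHS]inE.
  rewrite -[in LHS]/(in_mem w (mem (fun w : cube (l * k) => [forall j in J, Q (blk w j)]))).
  rewrite /in_mem /=.
  apply/forallP/forallP => h j.
    rewrite /F; case: ifP => hj //; exact: (implyP (h j) hj).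
  apply/implyP => hj; have := h j; rewrite /F.
  by rewrite (_ : (j \in J) = true).
have -> : #|{: cube (l * k)}| = (\prod_(j : 'I_k) 2 ^ l)%N.
  by rewrite card_cube expnM prod_nat_const card_ord.
rewrite card_blocks.
rewrite !natr_prod -prodf_div (bigID (fun j => j \in J)) /=.
rewrite [X in _ * X]big1 ?mulr1; last first.
  move=> j /negbTE hj; rewrite /F hj.
  rewrite -[X in X%:R / _]/(#|{: {ffun 'I_l -> bool}}|) card_blockV.
  by rewrite divff // pnatr_eq0 expn_eq0.
rewrite -prodr_const; apply: eq_bigr => j hj; by rewrite /F hj.
Qed.

Lemma prob_none (R : realType) l k (J : {set 'I_k}) (Q : pred {ffun 'I_l -> bool}) :
  prob R (fun w : cube (l * k) => [forall j in J, ~~ Q (blk w j)])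
  = (1 - #|Q|%:R / (2 ^ l)%:R) ^+ #|J|.
Proof.
rewrite (prob_blocks R J (fun v => ~~ Q v)); congr (_ ^+ _).
have h := cardC Q; rewrite card_blockV in h.
have h2 : ((2 ^ l)%:R : R) != 0 by rewrite pnatr_eq0 expn_eq0.
apply: (mulIf h2); rewrite mulrBl mul1r !divfK // -h natrD addrC addKr.
by congr (_%:R); apply: eq_card => v; rewrite !inE.
Qed.

Definition negv l (v : {ffun 'I_l -> bool}) : {ffun 'I_l -> bool} := [ffun b => ~~ v b].

Lemma negvK l : involutive (@negv l).
Proof. by move=> v; apply/ffunP => b; rewrite !ffunE negbK. Qed.

Lemma card_negv l (Q : pred {ffun 'I_l -> bool}) : #|(fun v => Q (negv v))| = #|Q|.
Proof.
rewrite -(fintype.card_image (inv_inj (@negvK l)) Q).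
apply: eq_card => v; apply/idP/fintype.imageP => [h | [u hu ->]].
  by exists (negv v); rewrite ?negvK.
by rewrite /in_mem /= negvK.
Qed.

Lemma blk_neg l k (w : cube (l * k)) j : blk (negw w) j = negv (blk w j).
Proof. by apply/ffunP => b; rewrite !ffunE. Qed.

Definition allT l (v : {ffun 'I_l -> bool}) := [forall b, v b].

Lemma card_allT l : #|(@allT l)| = 1%N.
Proof.
apply: (@fintype.eq_card1 _ ([ffun => true] : {ffun 'I_l -> bool})) => v; rewrite inE /in_mem /= /allT.
apply/forallP/eqP => [h | ->]; last by move=> b; rewrite ffunE.
by apply/ffunP => b; rewrite ffunE h.
Qed.

Lemma tribesE l k (w : cube (l * k)) :
  tribes w = ~~ [forall j in [set: 'I_k]%SET, ~~ allT (blk w j)].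
Proof.
rewrite negb_forall /tribes; apply: eq_existsb => j.
rewrite finset.in_setT /= negbK /allT; apply/forallP/forallP => h b.
  by rewrite ffunE; have := h (idx j b); rewrite idx_div eqxx.
apply/implyP => /eqP hi; rewrite -(idx_qr b).
have -> : qo b = j by apply: val_inj.
by have := h (ro b); rewrite ffunE.
Qed.

Lemma prob_tribes (R : realType) l k :
  prob R (fun w : cube (l * k) => tribes w) = 1 - (1 - ((2 ^ l)%:R)^-1) ^+ k.
Proof.
have := prob_none R [set: 'I_k] (@allT l); rewrite card_allT cardsT card_ord mul1r => <-.
rewrite -probC /prob; congr (_%:R / _).
apply: eq_card => w; rewrite /in_mem /=; exact: tribesE.
Qed.

Lemma prob_tribesN (R : realType) l k :
  prob R (fun w : cube (l * k) => tribes (negw w)) = 1 - (1 - ((2 ^ l)%:R)^-1) ^+ k.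
Proof.
have := prob_none R [set: 'I_k] (fun v => @allT l (negv v)).
rewrite card_negv card_allT cardsT card_ord mul1r => <-.
rewrite -probC /prob; congr (_%:R / _).
apply: eq_card => w; rewrite /in_mem /= tribesE; congr (~~ _).
by apply: eq_forallb => j; rewrite blk_neg.
Qed.


Local Open Scope ring_scope.
Local Open Scope classical_set_scope.

Definition onez l (v : {ffun 'I_l -> bool}) := #|[pred b | ~~ v b]| == 1%N.

Lemma card_onez l : #|(@onez l)| = l.
Proof.
pose e (b : 'I_l) : {ffun 'I_l -> bool} := [ffun b' => b' != b].
have einj : injective e.
  move=> b1 b2 /ffunP /(_ b1); rewrite !ffunE eqxx /=.
  by case: eqP => // ->.
rewrite -[RHS]card_ord -(fintype.card_image einj 'I_l).
apply: eq_card => v.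
apply/idP/fintype.imageP => [/card1P [b hb] | [b _ ->]].
  exists b => //; apply/ffunP => b'; rewrite ffunE.
  by have := hb b'; rewrite !inE => <-; rewrite negbK.
rewrite /in_mem /= /onez; apply/card1P; exists b => b'.
by rewrite !inE ffunE negbK.
Qed.

Lemma onez_uniq l (v : {ffun 'I_l -> bool}) b b' :
  onez v -> ~~ v b -> ~~ v b' -> b' = b.
Proof.
move=> /card1P [b0 h] hb hb'.
have := h b; have := h b'; rewrite !inE hb hb' => /esym/eqP -> /esym/eqP -> //.
Qed.

Lemma onez_ex l (v : {ffun 'I_l -> bool}) : onez v -> exists b, ~~ v b.
Proof. by move=> /card1P [b0 h]; exists b0; have := h b0; rewrite !inE eqxx. Qed.

Lemma qo_eq l k (i : 'I_(l * k)) (j : 'I_k) : (i %/ l)%N = j -> qo i = j.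
Proof. by move=> h; apply: val_inj. Qed.

Lemma flip_T l k (w : cube (l * k)) j b :
  onez (blk w j) -> ~~ blk w j b -> tribes (flip w (idx j b)).
Proof.
move=> ho hb; apply/existsP; exists j; apply/forallP => i; apply/implyP => /eqP hi.
rewrite ffunE; case: eqP => [-> | hne]; first by move: hb; rewrite ffunE.
case: (boolP (w i)) => // hwi; exfalso; apply: hne.
have hq := qo_eq hi.
have : ~~ blk w j (ro i) by rewrite ffunE -hq idx_qr.
by move/(onez_uniq ho hb) => hr; rewrite -(idx_qr i) hq hr.
Qed.

Lemma flip_F l k (w : cube (l * k)) j b :
  ~~ tribes (negw w) -> ~~ blk w j b -> ~~ tribes (negw (flip w (idx j b))).
Proof.
move=> hn hb; apply/negP => /existsP [j2 /forallP h2].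
case: (eqVneq j2 j) => [e | ne].
  have := h2 (idx j b); rewrite idx_div e eqxx /= !ffunE eqxx negbK.
  by move: hb; rewrite ffunE => /negbTE ->.
move/negP: hn; apply; apply/existsP; exists j2; apply/forallP => i.
apply/implyP => hi; have := implyP (h2 i) hi; rewrite !ffunE.
case: eqP => // ei; move: hi; rewrite ei idx_div => /eqP /val_inj ej.
by move: ne; rewrite ej eqxx.
Qed.

Lemma flipN m (w : cube m) i : flip (negw w) i = negw (flip w i).
Proof. by apply/ffunP => x; rewrite !ffunE; case: eqP. Qed.

Lemma negwK m : involutive (@negw m).
Proof. by move=> w; apply/ffunP => x; rewrite !ffunE negbK. Qed.

Lemma event3 l k (w : cube (l * k)) :
  ~~ tribes w -> ~~ tribes (negw w) ->
  [exists j, onez (blk w j)] -> [exists j, onez (blk (negw w) j)] ->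
  [exists i, exists j, (tribes_diff (flip w i) == 1%R) && (tribes_diff (flip w j) == (-1)%R)].
Proof.
move=> t1 t2 /existsP [j1 o1] /existsP [j2 o2].
have [b1 hb1] := onez_ex o1; have [b2 hb2] := onez_ex o2.
apply/existsP; exists (idx j1 b1); apply/existsP; exists (idx j2 b2).
have T1 := flip_T o1 hb1; have F1 := flip_F t2 hb1.
have T2 := flip_T o2 hb2.
have F2 : ~~ tribes (negw (flip (negw w) (idx j2 b2))) by apply: flip_F; rewrite ?negwK.
move: T2 F2; rewrite flipN negwK => T2 F2.
by rewrite /tribes_diff T1 (negbTE F1) T2 (negbTE F2).
Qed.

Lemma piv_ge l k (w : cube (l * k)) A (hA : (0 < A)%N) :
  (forall g : 'I_A, exists j : 'I_k, ((j %% A)%N == g) && onez (blk w j)) ->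
  ~~ tribes w -> (A <= #|pivotal (@tribes l k) w|)%N.
Proof.
move=> hg t0.
pose h (i : 'I_(l * k)) : 'I_A := Ordinal (ltn_pmod (qo i) hA).
pose S := [set i : 'I_(l * k) | onez (blk w (qo i)) && ~~ w i]%SET.
have sub : S \subset pivotal (@tribes l k) w.
  apply/fintype.subsetP => i; rewrite !inE => /andP [ho hi].
  have hb : ~~ blk w (qo i) (ro i) by rewrite ffunE idx_qr.
  by have := flip_T ho hb; rewrite idx_qr => ->; rewrite (negbTE t0).
have e : h @: S = [set: 'I_A]%SET.
  apply/setP => g; rewrite finset.in_setT; have [j /andP [/eqP hj ho]] := hg g.
  have [b hb] := onez_ex ho.
  apply/imsetP; exists (idx j b).
    by rewrite inE qo_idx ho; move: hb; rewrite ffunE.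
  by apply: val_inj; rewrite /= idx_div.
apply: leq_trans (subset_leq_card sub).
by rewrite -[X in (X <= _)%N]card_ord -cardsT -e; apply: leq_imset_card.
Qed.


Local Open Scope ring_scope.
Local Open Scope classical_set_scope.
Local Open Scope nat_scope.

Definition BP l k : {set {perm 'I_(l * k)}} :=
  [set s : {perm 'I_(l * k)} |
     [forall x, forall y, (s x %/ l == s y %/ l) == (x %/ l == y %/ l)]]%SET.

Lemma BP_group l k : group_set (BP l k).
Proof.
apply/group_setP; split.
  by rewrite inE; apply/forallP => x; apply/forallP => y; rewrite !perm1.
move=> s t; rewrite !inE => /forallP hs /forallP ht.
apply/forallP => x; apply/forallP => y; rewrite !permM.
have := forallP (ht (s x)) (s y); move/eqP ->.
exact: (forallP (hs x) y).
Qed.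

Definition BPG l k : {group {perm 'I_(l * k)}} := Group (BP_group l k).

Definition pw l k (w : cube (l * k)) (s : {perm 'I_(l * k)}) : cube (l * k) :=
  [ffun i => w (s i)].

Lemma tribes_pw1 l k (hl : 0 < l) (w : cube (l * k)) s :
  s \in BPG l k -> tribes (pw w s) -> tribes w.
Proof.
move=> hs /existsP [j /forallP hj].
pose b0 : 'I_l := Ordinal hl.
apply/existsP; exists (qo (s (idx j b0))); apply/forallP => y; apply/implyP => hy.
have hs' := hs; rewrite inE in hs'; move/forallP: hs' => hs'.
have e := forallP (hs' (s^-1 y)%g) (idx j b0).
have hy' : y %/ l == s (idx j b0) %/ l := hy.
rewrite permKV hy' in e; move/esym/eqP: e.
rewrite idx_div => hx.
have := implyP (hj (s^-1 y)%g) hx; by rewrite ffunE permKV.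
Qed.

Lemma tribes_pw l k (hl : 0 < l) (w : cube (l * k)) s :
  s \in BPG l k -> tribes (pw w s) = tribes w.
Proof.
move=> hs; apply/idP/idP; first exact: tribes_pw1.
have hs' : (s^-1)%g \in BPG l k by rewrite groupV.
move=> tw; apply: (tribes_pw1 hl hs').
by have -> : pw (pw w s) (s^-1)%g = w by apply/ffunP => i; rewrite !ffunE permKV.
Qed.

Lemma mod_inj k c a b : a < k -> b < k -> (a + c) %% k = (b + c) %% k -> a = b.
Proof. by move=> ha hb /eqP; rewrite eqn_modDr !modn_small // => /eqP. Qed.

Lemma trans_tribes l k : 0 < l -> 0 < k -> transitive_fun (@tribes_diff l k).
Proof.
move=> hl hk; exists (BPG l k); split; last first.
  move=> s hs w; rewrite /tribes_diff.
  have -> : negw [ffun i => w (s i)] = pw (negw w) s by apply/ffunP => i; rewrite !ffunE.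
  by rewrite -/(pw w s) !(tribes_pw hl).
pose sh (c : 'I_k) (d : 'I_l) (x : 'I_(l * k)) : 'I_(l * k) :=
  idx (Ordinal (ltn_pmod (qo x + c) hk)) (Ordinal (ltn_pmod (ro x + d) hl)).
have shinj c d : injective (sh c d).
  move=> x1 x2 e.
  have e1 : qo (sh c d x1) = qo (sh c d x2) by rewrite e.
  have e2 : ro (sh c d x1) = ro (sh c d x2) by rewrite e.
  rewrite /sh !qo_idx in e1; rewrite /sh !ro_idx in e2.
  move/(congr1 val): e1 => /= e1; move/(congr1 val): e2 => /= e2.
  rewrite -(idx_qr x1) -(idx_qr x2).
  have -> : qo x1 = qo x2 by apply: val_inj; exact: (mod_inj (ltn_ord (qo x1)) (ltn_ord (qo x2)) e1).
  by have -> : ro x1 = ro x2 by apply: val_inj; exact: (mod_inj (ltn_ord (ro x1)) (ltn_ord (ro x2)) e2).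
pose x0 : 'I_(l * k) := idx (Ordinal hk) (Ordinal hl).
apply/imsetP; exists x0; first by rewrite finset.in_setT.
apply/esym/setP => y; rewrite finset.in_setT; apply/orbitP.
exists (perm (shinj (qo y) (ro y))).
  rewrite inE; apply/forallP => x; apply/forallP => z; rewrite !permE.
  rewrite !idx_div /=; apply/eqP; apply/idP/idP => /eqP e; apply/eqP.
    exact: (mod_inj (ltn_ord (qo x)) (ltn_ord (qo z)) e).
  by rewrite e.
rewrite /= apermE permE /sh.
rewrite -[RHS](idx_qr y); congr idx; apply: val_inj => /=.
  by rewrite mul0n add0n div0n add0n modn_small // (div_lt y).
by rewrite mul0n add0n mod0n add0n modn_mod.
Qed.


Local Open Scope ring_scope.
Local Open Scope classical_set_scope.

Lemma bern (R : realType) (p : R) m : 0 <= p -> p <= 1 ->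
  (1 - p) ^+ m * (1 + m%:R * p) <= 1.
Proof.
move=> p0 p1; elim: m => [|m IH]; first by rewrite expr0 mul0r addr0 mul1r.
apply: le_trans IH; rewrite exprSr -mulrA.
apply: ler_wpM2l; first by rewrite exprn_ge0 // subr_ge0.
have hm : 0 <= (m%:R : R) by [].
rewrite -natr1; nra.
Qed.

Lemma to1 (R : realType) (u e : nat -> R) : e @ \oo --> (0 : R) ->
  (\forall n \near \oo, 1 - e n <= u n) -> (forall n, u n <= 1) -> u @ \oo --> (1 : R).
Proof.
move=> /cvgr0Pnorm_le he hl hu; apply/cvgrPdist_le => eps eps0.
have := he eps eps0; move=> he'; near=> n.
rewrite ger0_norm ?subr_ge0 //.
have h1 : 1 - e n <= u n by near: n.
have h2 : `|e n| <= eps by near: n.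
have := ler_norm (e n); lra.
Unshelve. all: by end_near.
Qed.

Lemma le_sqrt (R : realType) (a y : R) : 0 <= a -> 0 <= y ->
  (a <= Num.sqrt y) = (a ^+ 2 <= y).
Proof. by move=> a0 y0; rewrite -(ler_sqrt (a ^+ 2) y0) sqrtr_sqr ger0_norm. Qed.

Lemma le_sqrt4 (R : realType) (a y : R) : 0 <= a -> 0 <= y ->
  (a <= Num.sqrt (Num.sqrt y)) = (a ^+ 4 <= y).
Proof.
move=> a0 y0; rewrite le_sqrt ?sqrtr_ge0 // le_sqrt ?exprn_ge0 //.
by rewrite -exprM.
Qed.

Lemma exists_A (R : realType) (mu : nat -> R) : mu @ \oo --> +oo ->
  exists A : nat -> nat, (fun n => (A n)%:R : R) @ \oo --> +oo /\
    \forall n \near \oo, ((A n)%:R ^+ 4 <= mu n).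
Proof.
move=> /cvgryPge hmu.
exists (fun n => Num.truncn (Num.sqrt (Num.sqrt (mu n)))); split.
  apply/cvgryPge => M; have hM := hmu ((`|M| + 1) ^+ 4); near=> n.
  have hMn : (`|M| + 1) ^+ 4 <= mu n by near: n.
  have m0 : 0 <= mu n by apply: le_trans hMn; rewrite exprn_ge0 // addr_ge0.
  have := hMn; rewrite -le_sqrt4 ?addr_ge0 // => hs.
  have := truncnS_gt (Num.sqrt (Num.sqrt (mu n))); rewrite -natr1.
  have := ler_norm M; lra.
have h0 := hmu 0; near=> n.
have m0 : 0 <= mu n by near: n.
rewrite -le_sqrt4 //.
by rewrite truncn_le sqrtr_ge0.
Unshelve. all: by end_near.
Qed.


Local Open Scope ring_scope.
Local Open Scope classical_set_scope.

Lemma prob_lb2 (R : realType) m (E B1 B2 : pred (cube m)) :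
  (forall w, ~~ B1 w -> ~~ B2 w -> E w) -> 1 - (prob R B1 + prob R B2) <= prob R E.
Proof.
move=> h; apply: le_trans (_ : prob R (fun w => ~~ (B1 w || B2 w)) <= _).
  by rewrite probC lerB // probU.
by apply: prob_le => w; rewrite negb_or => /andP [] /h; apply.
Qed.

Definition Jg K A (g : 'I_A) : {set 'I_K} := [set j : 'I_K | (j %% A == g)%N]%SET.

Lemma card_Jg K A (g : 'I_A) : (K %/ A <= #|Jg K g|)%N.
Proof.
have hA : (0 < A)%N by case: g => g /=; case: A => // /[swap] -[].
have lt (t : 'I_(K %/ A)) : (t * A + g < K)%N.
  have := ltn_ord t; rewrite -(leq_pmul2r hA) => h.
  apply: leq_trans (leq_trans h (leq_trunc_div K A)).
  by rewrite mulSn; have := ltn_ord g; lia.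
pose f (t : 'I_(K %/ A)) : 'I_K := Ordinal (lt t).
have finj : injective f.
  move=> t1 t2 /(congr1 val) /= e; apply: val_inj => /=.
  have := congr1 (fun x => (x %/ A)%N) e; rewrite !divnMDl // (divn_small (ltn_ord g)).
  by rewrite !addn0.
rewrite -[X in (X <= _)%N]card_ord -(fintype.card_image finj).
apply: subset_leq_card; apply/fintype.subsetP => j /fintype.imageP [t _ ->].
by rewrite inE /= modnMDl modn_small.
Qed.

Lemma group_bound (R : realType) (A K m : nat) (p mu : R) :
  0 <= p -> p <= 1 -> mu = K%:R * p -> (K < m.+1 * A)%N -> (1 <= A)%N ->
  (A%:R : R) ^+ 4 <= mu -> A%:R * (1 - p) ^+ m <= (A%:R : R)^-1.
Proof.
move=> p0 p1 emu hK hA hA4.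
have a1 : (1 : R) <= A%:R by rewrite ler1n.
have hK' : (K%:R : R) <= (m%:R + 1) * A%:R.
  by rewrite natr1 -natrM ler_nat ltnW.
have hb := bern m p0 p1.
have e0 : 0 <= (1 - p) ^+ m by rewrite exprn_ge0 // subr_ge0.
have hm0 : (0 : R) <= m%:R by [].
set x := (1 - p) ^+ m in hb e0 *.
set a := (A%:R : R) in a1 hK' hA4 *.
set M := (m%:R : R) in hK' hb hm0 *.
set k := (K%:R : R) in hK' emu.
have a0 : 0 < a by apply: lt_le_trans ltr01 a1.
rewrite -[X in _ <= X]div1r ler_pdivlMr //.
have h1 : mu <= (1 + M * p) * a by rewrite emu; nra.
have h2 : a ^+ 3 * a <= (1 + M * p) * a by rewrite -exprSr; apply: le_trans h1.
rewrite ler_pM2r // in h2.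
have h3 : a ^+ 2 <= a ^+ 3.
  by rewrite [X in _ <= X]exprSr -[X in X <= _]mulr1 ler_wpM2l // exprn_ge0 // ltW.
have h4 : a ^+ 2 <= 1 + M * p by apply: le_trans h2.
rewrite mulrAC -expr2; apply: le_trans hb.
by rewrite mulrC ler_wpM2l.
Qed.


Local Open Scope ring_scope.
Local Open Scope classical_set_scope.

Lemma forall_setT_ex (I : finType) (P : pred I) :
  ~~ [forall j in [set: I]%SET, ~~ P j] -> [exists j, P j].
Proof.
rewrite negb_forall => /existsP [j]; rewrite finset.in_setT /= negbK => h.
by apply/existsP; exists j.
Qed.

Theorem proposition1 (R : realType) (l k : nat -> nat)
  (hl : forall n, (0 < l n)%N) (hk : forall n, (0 < k n)%N)
  (h1 : (fun n => (1 - ((2 ^ l n)%:R : R)^-1) ^+ k n) @ \oo --> (1 : R))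
  (h2 : (fun n => ((k n * l n)%:R / (2 ^ l n)%:R : R)) @ \oo --> +oo) :
  bribable R (fun n => tribes_diff (l := l n) (k := k n)) /\
  exists a : nat -> nat,
    (forall n, (0 < a n)%N) /\
    (fun n => (a n)%:R : R) @ \oo --> +oo /\
    (fun n => prob R (fun w : cube (l n * k n) =>
        (a n < #|pivotal (@tribes (l n) (k n)) w|)%N)) @ \oo --> (1 : R).
Proof.
pose q n : R := ((2 ^ l n)%:R)^-1.
pose t n : R := 1 - (1 - q n) ^+ k n.
pose p n : R := (l n)%:R / (2 ^ l n)%:R.
pose s n : R := (1 - p n) ^+ k n.
have p0 n : 0 <= p n by rewrite /p divr_ge0.
have p1 n : p n <= 1.
  rewrite /p ler_pdivrMr ?ltr0n ?expn_gt0 // mul1r ler_nat.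
  by apply: ltnW; apply: ltn_expl.
have emu n : (k n * l n)%:R / (2 ^ l n)%:R = (k n)%:R * p n :> R.
  by rewrite /p natrM mulrA.
move/cvgryPge: (h2) => h2'.
have ht : t @ \oo --> (0 : R).
  move/cvgrPdist_le: h1 => h1'; apply/cvgr0Pnorm_le => e e0.
  exact: h1' e e0.
have hs : s @ \oo --> (0 : R).
  apply/cvgr0Pnorm_le => e e0; have hh := h2' (e^-1); near=> n.
  have hmu : e^-1 <= (k n)%:R * p n by rewrite -emu; near: n.
  have s0 : 0 <= s n by rewrite /s exprn_ge0 // subr_ge0.
  have hb := bern (k n) (p0 n) (p1 n).
  rewrite ger0_norm // -[e]invrK -div1r ler_pdivlMr ?invr_gt0 //.
  apply: le_trans hb; rewrite -/(s n) ler_wpM2l //.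
  by apply: le_trans hmu _; rewrite lerDr.
have Pt n : prob R (fun w : cube (l n * k n) => tribes w) = t n by apply: prob_tribes.
have PtN n : prob R (fun w : cube (l n * k n) => tribes (negw w)) = t n by apply: prob_tribesN.
have Ps n : prob R (fun w : cube (l n * k n) =>
    [forall j in [set: 'I_(k n)]%SET, ~~ onez (blk w j)]) = s n.
  by rewrite prob_none card_onez cardsT card_ord.
have PsN n : prob R (fun w : cube (l n * k n) =>
    [forall j in [set: 'I_(k n)]%SET, ~~ onez (blk (negw w) j)]) = s n.
  have -> : prob R (fun w : cube (l n * k n) =>
    [forall j in [set: 'I_(k n)]%SET, ~~ onez (blk (negw w) j)]) =
    prob R (fun w : cube (l n * k n) =>
    [forall j in [set: 'I_(k n)]%SET, ~~ (fun v => @onez (l n) (negv v)) (blk w j)]).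
    rewrite /prob; congr (_%:R / _); apply: eq_card => w; rewrite /in_mem /=.
    by apply: eq_forallb => j; rewrite blk_neg.
  have := prob_none R [set: 'I_(k n)]%SET (fun v => @onez (l n) (negv v)).
  by rewrite card_negv card_onez cardsT card_ord.

split.
  split.
  - by move=> n; apply: trans_tribes.
  - apply: (@to1 R _ (fun n => t n + t n)).
    + by rewrite -[X in _ --> X](addr0 (0 : R)); apply: cvgD.
    + near=> n; rewrite -{1}(Pt n) -(PtN n).
      apply: prob_lb2 => w /negbTE a /negbTE b.
      by rewrite /tribes_diff a b.
    + by move=> n; apply: prob_le1.
  - apply: (@to1 R _ (fun n => (t n + t n) + (s n + s n))).
    + rewrite -[X in _ --> X](addr0 (0 : R)); apply: cvgD; rewrite -[X in _ --> X](addr0 (0 : R)); by apply: cvgD.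
    + near=> n.
      pose B1 := fun w : cube (l n * k n) => tribes w || tribes (negw w).
      pose B2 := fun w : cube (l n * k n) =>
        [forall j in [set: 'I_(k n)]%SET, ~~ onez (blk w j)] ||
        [forall j in [set: 'I_(k n)]%SET, ~~ onez (blk (negw w) j)].
      apply: (@le_trans _ _ (1 - (prob R B1 + prob R B2))); last apply: prob_lb2.
        rewrite lerB // lerD //.
          by apply: le_trans (probU _ _ _) _; rewrite Pt PtN.
        by apply: le_trans (probU _ _ _) _; rewrite Ps PsN.
      move=> w; rewrite !negb_or => /andP [a b] /andP [c d].
      by apply: event3 => //; apply: forall_setT_ex.
    + by move=> n; apply: prob_le1.
have [A [hA hA4]] := exists_A h2.
move/cvgryPge: (hA) => hA'.
exists (fun n => maxn 1 (A n).-1); split; first by move=> n; rewrite leq_maxl.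
split.
  apply/cvgryPge => M; have hM := hA' (M + 1); near=> n.
  have hMn : M + 1 <= (A n)%:R by near: n.
  have e1 : (A n)%:R <= ((A n).-1)%:R + 1 :> R.
    by rewrite natr1 ler_nat leqSpred.
  have e2 : ((A n).-1)%:R <= (maxn 1 (A n).-1)%:R :> R by rewrite ler_nat leq_maxr.
  lra.
have hAinv : (fun n => ((A n)%:R : R)^-1) @ \oo --> (0 : R).
  apply/cvgr0Pnorm_le => e e0; have he := hA' (e^-1); near=> n.
  have hn : e^-1 <= (A n)%:R by near: n.
  have An : 0 < ((A n)%:R : R) by apply: lt_le_trans hn; rewrite invr_gt0.
  rewrite ger0_norm; last by rewrite invr_ge0 ltW.
  by rewrite -[e]invrK lef_pV2 ?posrE ?invr_gt0.
apply: (@to1 R _ (fun n => t n + ((A n)%:R : R)^-1)).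
  by rewrite -[X in _ --> X](addr0 (0 : R)); apply: cvgD.
  have hA2 := hA' 2; near=> n.
  have A2 : (2 <= A n)%N by rewrite -(ler_nat R); near: n.
  have A4 : ((A n)%:R : R) ^+ 4 <= (k n * l n)%:R / (2 ^ l n)%:R by near: n.
  have Apos : (0 < A n)%N by apply: leq_trans A2.
  pose B1 := fun w : cube (l n * k n) => tribes w.
  pose B2 := fun w : cube (l n * k n) =>
    [exists g : 'I_(A n), [forall j in Jg (k n) g, ~~ onez (blk w j)]].
  apply: (@le_trans _ _ (1 - (prob R B1 + prob R B2))); last apply: prob_lb2.
    rewrite lerB // lerD // ?Pt //.
    apply: le_trans (prob_exists _ _) _.
    have -> : \sum_(g < A n) prob R (fun w : cube (l n * k n) =>
         [forall j in Jg (k n) g, ~~ onez (blk w j)])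
       = \sum_(g < A n) (1 - p n) ^+ #|Jg (k n) g|.
      by apply: eq_bigr => g _; rewrite prob_none card_onez.
    apply: le_trans (_ : \sum_(g < A n) (1 - p n) ^+ (k n %/ A n) <= _).
      apply: ler_sum => g _; apply: ler_wiXn2l; last exact: card_Jg.
        by rewrite subr_ge0.
      by rewrite lerBlDr lerDl.
    rewrite sumr_const card_ord -[X in X <= _]mulr_natl.
    apply: group_bound (p0 n) (p1 n) (emu n) _ _ A4.
      by apply: ltn_ceil.
    by [].
  move=> w /negbTE t0 /negP hB2.
  have hg : forall g : 'I_(A n), exists j : 'I_(k n), ((j %% A n)%N == g) && onez (blk w j).
    move=> g; case: (boolP [exists j : 'I_(k n), ((j %% A n)%N == g) && onez (blk w j)]).
      by move/fintype.existsP.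
    move=> hne; exfalso; apply: hB2.
    apply/fintype.existsP; exists g; apply/forallP => j; apply/implyP => hj.
    apply/negP => ho; move/negP: hne; apply; apply/fintype.existsP; exists j.
    by rewrite ho andbT; move: hj; rewrite inE.
  have := piv_ge Apos hg (negbT t0).
  have -> : maxn 1 (A n).-1 = (A n).-1 by apply/maxn_idPr; rewrite -ltnS (ltn_predK A2).
  by apply: leq_trans; rewrite (ltn_predK A2).
by move=> n; apply: prob_le1.
Unshelve. all: by end_near.
Qed.
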